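(* Let $f(x)=x^5+px^4+qx^3+rx^2+sx+t$ with real coefficients, and suppose $D=0$ and $L_1<0$ (so that $f$ has one real double root, one real simple root and two non-real complex conjugate roots). Then the double root of $f$ is $d=C_0/L_1$, and with $F_2=r+3qd+6pd^2+10d^3$: if $F_2>0$ then the real simple root is smaller than the double root, and if $F_2<0$ then the real simple root is larger than the double root.
   Context: Let $\alpha_1,\dots,\alpha_5\in\mathbb{C}$ be the roots of $f$ listed with multiplicity. $D=\prod_{1\le i<j\le 5}(\alpha_i-\alpha_j)^2$ is the discriminant of $f$. $L_1=-264ps^2r-12p^3tq^2+36r^3pq-124srpq^2+28srp^3q+260sptq-132p^2qrt+240pr^2t+234sqr^2+32p^4tr+48ptq^3-56sp^3t-80q^2rt+194qs^2p^2-600str-6q^3sp^2+2p^2q^2r^2-12sr^2p^2-54r^4+320s^3-8q^3r^2-8r^3p^3+250qt^2-176q^2s^2+24q^4s-36p^4s^2-100p^2t^2$. $C_0=48sp^4t+4sp^3r^2+80p^3t^2-32p^3rqt-3p^3s^2q+7s^2p^2r-p^2srq^2-4p^2r^2t+9p^2tq^3-266sqp^2t+16ps^3+146ptrq^2-18spr^2q+290sptr-275pqt^2+12ps^2q^2+4sq^3r-195r^2qt+260sq^2t+27sr^3+375t^2r-36q^4t-48rs^2q-400ts^2$. *)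

(* Defs.v *)
From HB Require Import structures.
From mathcomp Require Import all_boot all_order all_algebra.
Set Implicit Arguments. Unset Strict Implicit. Unset Printing Implicit Defensive.
Import Order.TTheory GRing.Theory Num.Theory.
Local Open Scope ring_scope.

Section Quintic.
Variable C : numClosedFieldType.
Variables p q r s t : C.

Definition quintic : {poly C} :=
  'X^5 + p *: 'X^4 + q *: 'X^3 + r *: 'X^2 + s *: 'X + t%:P.

Definition discr5 (al : 'I_5 -> C) : C :=
  \prod_(i < 5) \prod_(j < 5 | (i < j)%N) (al i - al j) ^+ 2.

Definition L1 : C :=
  -264 * p * s^+2 * r - 12 * p^+3 * t * q^+2 + 36 * r^+3 * p * q - 124 * s * r * p * q^+2 + 28 * s * r * p^+3 * q
  + 260 * s * p * t * q - 132 * p^+2 * q * r * t + 240 * p * r^+2 * t + 234 * s * q * r^+2 + 32 * p^+4 * t * r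
  + 48 * p * t * q^+3 - 56 * s * p^+3 * t - 80 * q^+2 * r * t + 194 * q * s^+2 * p^+2 - 600 * s * t * r
  - 6 * q^+3 * s * p^+2 + 2 * p^+2 * q^+2 * r^+2 - 12 * s * r^+2 * p^+2 - 54 * r^+4 + 320 * s^+3
  - 8 * q^+3 * r^+2 - 8 * r^+3 * p^+3 + 250 * q * t^+2 - 176 * q^+2 * s^+2 + 24 * q^+4 * s
  - 36 * p^+4 * s^+2 - 100 * p^+2 * t^+2.

Definition C0 : C :=
  48 * s * p^+4 * t + 4 * s * p^+3 * r^+2 + 80 * p^+3 * t^+2 - 32 * p^+3 * r * q * t - 3 * p^+3 * s^+2 * q
  + 7 * s^+2 * p^+2 * r - p^+2 * s * r * q^+2 - 4 * p^+2 * r^+2 * t + 9 * p^+2 * t * q^+3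
  - 266 * s * q * p^+2 * t + 16 * p * s^+3 + 146 * p * t * r * q^+2 - 18 * s * p * r^+2 * q + 290 * s * p * t * r
  - 275 * p * q * t^+2 + 12 * p * s^+2 * q^+2 + 4 * s * q^+3 * r - 195 * r^+2 * q * t + 260 * s * q^+2 * t
  + 27 * s * r^+3 + 375 * t^+2 * r - 36 * q^+4 * t - 48 * r * s^+2 * q - 400 * t * s^+2.

End Quintic.

Definition F2 (C : numClosedFieldType) (p q r d : C) : C :=
  r + 3 * q * d + 6 * p * d^+2 + 10 * d^+3.

(* Main.v *)
Require Import Defs.
From HB Require Import structures.
From mathcomp Require Import all_boot all_order all_algebra.
From mathcomp Require Import ring.
Import Order.TTheory GRing.Theory Num.Theory.
Set Implicit Arguments. Unset Strict Implicit.
Local Open Scope ring_scope.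

Lemma key (C : numClosedFieldType) (a x1 S P : C) (ha : a \is Num.real)
  (hx1 : x1 \is Num.real) (hS : S \is Num.real) (hP : P \is Num.real)
  (hL : 2 * ((a - x1) * (a^+2 - a*S + P))^+2 * (x1^+2 - x1*S + P)^+2 * (S^+2 - 4*P) < 0) :
  (0 < (a-x1)*(a^+2-a*S+P) -> x1 < a) /\ ((a-x1)*(a^+2 - a*S + P) < 0 -> a < x1).
Proof.
have rD : S^+2 - 4*P \is Num.real by rewrite rpredB ?rpredM ?rpredX ?rpred_nat.
have hD : S^+2 - 4*P < 0.
  rewrite real_ltNge ?rpred0 //; apply/negP => h0.
  have : 0 <= 2 * ((a - x1) * (a^+2 - a*S + P))^+2 * (x1^+2 - x1*S + P)^+2 * (S^+2 - 4*P).
    apply: mulr_ge0 => //; apply: mulr_ge0; [apply: mulr_ge0|]; rewrite ?ler0n // -realEsqr.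
    - by rewrite !(rpredB, rpredD, rpredM, rpredX).
    - by rewrite !(rpredB, rpredD, rpredM, rpredX).
  by move=> h; have := le_lt_trans h hL; rewrite ltxx.
have hQ : 0 < a^+2 - a*S + P.
  have h4 : 0 < (2*a - S)^+2 - (S^+2 - 4*P).
    apply: ltr_wpDl; last by rewrite oppr_gt0.
    by rewrite -realEsqr rpredB ?rpredM ?rpred_nat.
  have e : (2*a - S)^+2 - (S^+2 - 4*P) = 4 * (a^+2 - a*S + P) by ring.
  by move: h4; rewrite e pmulr_rgt0 ?ltr0n.
split => h.
  by move: h; rewrite pmulr_lgt0 // subr_gt0.
by move: h; rewrite pmulr_llt0 // subr_lt0.
Qed.

Lemma final (C : numClosedFieldType) (p q a y1 y2 y3 L F : C)
  (hp : p \is Num.real) (hq : q \is Num.real) (ha : a \is Num.real)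
  (hy : y1 \is Num.real)
  (ep : p = -(2*a + (y1+y2+y3)))
  (eqq : q = a^+2 + 2*a*(y1+y2+y3) + (y1*y2+y1*y3+y2*y3))
  (eL : L = 2 * ((a-y1)*(a-y2)*(a-y3))^+2 * ((y1-y2)*(y1-y3)*(y2-y3))^+2)
  (hL : L < 0)
  (eF : F = (a-y1)*(a-y2)*(a-y3)) : (0 < F -> y1 < a) /\ (F < 0 -> a < y1).
Proof.
have eS : y2 + y3 = - p - 2 * a - y1 by rewrite ep; ring.
have rS : y2 + y3 \is Num.real by rewrite eS !rpredB ?rpredN ?rpredM ?rpred_nat.
have eP : y2 * y3 = q - a^+2 - 2*a*(y1 + (y2+y3)) - y1 * (y2 + y3) by rewrite eqq; ring.
have rP : y2 * y3 \is Num.real.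
  by rewrite eP !rpredB ?rpredX ?rpredM ?(rpredD hy rS) ?rpred_nat.
have hL' : 2 * ((a - y1) * (a ^+ 2 - a * (y2 + y3) + y2 * y3)) ^+ 2 *
  (y1 ^+ 2 - y1 * (y2 + y3) + y2 * y3) ^+ 2 * ((y2 + y3) ^+ 2 - 4 * (y2 * y3)) < 0.
  by move: hL; rewrite eL; congr (_ < 0); ring.
have := key ha hy rS rP hL'.
have -> : (a - y1) * (a ^+ 2 - a * (y2 + y3) + y2 * y3) = F by rewrite eF; ring.
done.
Qed.

Lemma vieta (C : numClosedFieldType) (p q r s t a x1 x2 x3 : C)
 (hf : quintic p q r s t = ('X - a%:P)^+2 * (('X - x1%:P) * ('X - x2%:P) * ('X - x3%:P))) :
 [/\ p = -(2*a + (x1 + x2 + x3)),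
     q = a^+2 + 2*a*(x1 + x2 + x3) + (x1*x2 + x1*x3 + x2*x3),
     r = -(a^+2 * (x1 + x2 + x3) + 2*a*(x1*x2 + x1*x3 + x2*x3) + x1*x2*x3),
     s = a^+2 * (x1*x2 + x1*x3 + x2*x3) + 2*a*(x1*x2*x3) & t = - (a^+2 * (x1*x2*x3))].
Proof.
set S := x1 + x2 + x3; set S2 := x1*x2 + x1*x3 + x2*x3; set S3 := x1*x2*x3.
have E : quintic p q r s t = 'X^5 + (-(2*a + S)) *: 'X^4 + (a^+2 + 2*a*S + S2) *: 'X^3
   + (-(a^+2 * S + 2*a*S2 + S3)) *: 'X^2 + (a^+2 * S2 + 2*a*S3) *: 'X + (- (a^+2 * S3))%:P.
  rewrite hf -!mul_polyC /S /S2 /S3; ring.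
have c k := congr1 (fun P : {poly C} => P`_k) E.
move: (c 0%N) (c 1%N) (c 2%N) (c 3%N) (c 4%N); rewrite /quintic /= !coefE /=.
rewrite !(mulr0, mulr1, add0r, addr0) => h0 h1 h2 h3 h4.
by split.
Qed.

Lemma core (C : numClosedFieldType) (p q r s t : C)
  (hp : p \is Num.real) (hq : q \is Num.real) (hr : r \is Num.real)
  (hs : s \is Num.real) (ht : t \is Num.real) (a x1 x2 x3 : C)
  (hf : quintic p q r s t = ('X - a%:P)^+2 * (('X - x1%:P) * ('X - x2%:P) * ('X - x3%:P)))
  (hL1 : L1 p q r s t < 0) :
  let d := C0 p q r s t / L1 p q r s t in
  let f := quintic p q r s t in
  [/\ d \is Num.real,
      root f d, root f^`() d, ~~ root f^`()^`() d &
      forall e : C, e \is Num.real -> root f e -> e != d ->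
        (0 < F2 p q r d -> e < d) /\ (F2 p q r d < 0 -> d < e)].
Proof.
move=> d f.
have [ep eqq er es et] := vieta hf.
have L1E : L1 p q r s t = 2 * ((a-x1)*(a-x2)*(a-x3))^+2 * ((x1-x2)*(x1-x3)*(x2-x3))^+2.
  by rewrite /L1 ep eqq er es et; ring.
have C0E : C0 p q r s t = a * L1 p q r s t.
  by rewrite L1E /C0 ep eqq er es et; ring.
have hL0 : L1 p q r s t != 0 by rewrite ltr0_neq0.
have hd : d = a by rewrite /d C0E mulfK.
have rd : d \is Num.real.
  rewrite /d rpredM ?rpredV ?(ltr0_real hL1) //.
  by rewrite /C0 !(rpred_nat, rpredB, rpredD, rpredM, rpredX, rpredN, rpred1).
have ra : a \is Num.real by rewrite -hd.
have hG : (a-x1)*(a-x2)*(a-x3) != 0.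
  apply/negP => /eqP h0; move: hL0; by rewrite L1E h0 expr0n /= mulr0 mul0r eqxx.
have eF : F2 p q r d = (a-x1)*(a-x2)*(a-x3).
  by rewrite hd /F2 ep eqq er; ring.
split => //.
- by rewrite /f /root hf hd hornerM horner_exp hornerXsubC subrr expr0n mul0r.
- rewrite /f /root /quintic hd !derivE /= !(hornerD, hornerZ, hornerMn, hornerXn, hornerC, hornerX); apply/eqP.
  by rewrite ep eqq er es; ring.
- rewrite /f /root /quintic hd !derivE /= !(hornerD, hornerZ, hornerMn, hornerXn, hornerC, hornerX).
  apply/negP => /eqP H.
  have : 2 * ((a-x1)*(a-x2)*(a-x3)) = 0 by rewrite -H ep eqq er; ring.
  by apply/eqP; rewrite mulf_neq0 // pnatr_eq0.
move=> e re.
rewrite /f /root hf !(hornerM, horner_exp, hornerXsubC).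
rewrite !mulf_eq0 !subr_eq0 orbb => /orP[/eqP ea|].
  by rewrite hd ea eqxx.
rewrite eF hd.
move=> /orP[/orP[]|] /eqP ee _; subst e.
- by apply: (final (y2 := x2) (y3 := x3) hp hq ra re _ _ _ hL1) => //;
    rewrite ?L1E ?ep ?eqq; ring.
- by apply: (final (y2 := x1) (y3 := x3) hp hq ra re _ _ _ hL1) => //;
    rewrite ?L1E ?ep ?eqq; ring.
- by apply: (final (y2 := x1) (y3 := x2) hp hq ra re _ _ _ hL1) => //;
    rewrite ?L1E ?ep ?eqq; ring.
Qed.

Lemma prod5 (C : numClosedFieldType) (al : 'I_5 -> C) :
  \prod_(i < 5) ('X - (al i)%:P) = ('X - (al (inord 0))%:P) * ('X - (al (inord 1))%:P)
   * ('X - (al (inord 2))%:P) * ('X - (al (inord 3))%:P) * ('X - (al (inord 4))%:P).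
Proof.
rewrite (eq_bigr (fun i : 'I_5 => 'X - (al (inord i))%:P)); last by move=> i _; rewrite inord_val.
by rewrite !big_ord_recr big_ord0 /= mul1r.
Qed.

Theorem mainTheorem9 (C : numClosedFieldType) (p q r s t : C)
  (hp : p \is Num.real) (hq : q \is Num.real) (hr : r \is Num.real)
  (hs : s \is Num.real) (ht : t \is Num.real)
  (al : 'I_5 -> C)
  (hroots : quintic p q r s t = \prod_(i < 5) ('X - (al i)%:P))
  (hD : discr5 al = 0)
  (hL1 : L1 p q r s t < 0) :
  let d := C0 p q r s t / L1 p q r s t in
  let f := quintic p q r s t in
  [/\ d \is Num.real,
      root f d, root f^`() d, ~~ root f^`()^`() d &
      forall e : C, e \is Num.real -> root f e -> e != d ->
        (0 < F2 p q r d -> e < d) /\ (F2 p q r d < 0 -> d < e)].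
Proof.
move/eqP: hD; rewrite /discr5 => /prodf_eq0 [i _] /prodf_eq0 [j hij].
rewrite expf_eq0 /= subr_eq0 => /eqP eij.
rewrite prod5 in hroots.
have : al (inord i) = al (inord j) by rewrite !inord_val.
move: (nat_of_ord i) (nat_of_ord j) (ltn_ord j) hij => {eij}.
case=> [|[|[|[|[|?]]]]] [|[|[|[|[|?]]]]] //= _ _ E.
- apply: (core hp hq hr hs ht (a := al (inord 0)) (x1 := al (inord 2)) (x2 := al (inord 3)) (x3 := al (inord 4)) _ hL1).
  by rewrite hroots -E; ring.
- apply: (core hp hq hr hs ht (a := al (inord 0)) (x1 := al (inord 1)) (x2 := al (inord 3)) (x3 := al (inord 4)) _ hL1).
  by rewrite hroots -E; ring.
- apply: (core hp hq hr hs ht (a := al (inord 0)) (x1 := al (inord 1)) (x2 := al (inord 2)) (x3 := al (inord 4)) _ hL1).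
  by rewrite hroots -E; ring.
- apply: (core hp hq hr hs ht (a := al (inord 0)) (x1 := al (inord 1)) (x2 := al (inord 2)) (x3 := al (inord 3)) _ hL1).
  by rewrite hroots -E; ring.
- apply: (core hp hq hr hs ht (a := al (inord 1)) (x1 := al (inord 0)) (x2 := al (inord 3)) (x3 := al (inord 4)) _ hL1).
  by rewrite hroots -E; ring.
- apply: (core hp hq hr hs ht (a := al (inord 1)) (x1 := al (inord 0)) (x2 := al (inord 2)) (x3 := al (inord 4)) _ hL1).
  by rewrite hroots -E; ring.
- apply: (core hp hq hr hs ht (a := al (inord 1)) (x1 := al (inord 0)) (x2 := al (inord 2)) (x3 := al (inord 3)) _ hL1).
  by rewrite hroots -E; ring.
- apply: (core hp hq hr hs ht (a := al (inord 2)) (x1 := al (inord 0)) (x2 := al (inord 1)) (x3 := al (inord 4)) _ hL1).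
  by rewrite hroots -E; ring.
- apply: (core hp hq hr hs ht (a := al (inord 2)) (x1 := al (inord 0)) (x2 := al (inord 1)) (x3 := al (inord 3)) _ hL1).
  by rewrite hroots -E; ring.
- apply: (core hp hq hr hs ht (a := al (inord 3)) (x1 := al (inord 0)) (x2 := al (inord 1)) (x3 := al (inord 2)) _ hL1).
  by rewrite hroots -E; ring.
Qed.
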